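(* Let $L$ be a $c$-lattice and $S$ a multiplicatively closed subset of $L$ (with $1\in S$, $0\notin S$), and let $p\in L$. If $q_1,\dots,q_n$ are $S$-$p$-primary elements of $L$, then $\bigwedge_{i=1}^n q_i$ is an $S$-$p$-primary element of $L$.
   Context: A multiplicative lattice is a complete lattice with a commutative, associative multiplication distributing over arbitrary joins, with $1$ as identity; $L_*$ is the set of compact elements. A $c$-lattice is a compactly generated multiplicative lattice with $1$ compact in which the product of two compact elements is compact. A multiplicatively closed subset is a nonempty $S\subseteq L_*$ closed under multiplication. $\sqrt a=\bigvee\{x\in L_*\mid x^n\le a\text{ for some }n\in\mathbb{Z}^+\}$. A proper element $p$ with $t\not\le p$ for all $t\in S$ is $S$-prime if there is $s\in S$ such that $ab\le p$ implies $sa\le p$ or $sb\le p$ for all $a,b$. A proper element $q$ with $t\not\le q$ for all $t\in S$ is $S$-primary if there is $s\in S$ such that $cd\le q$ implies $sc\le q$ or $sd\le\sqrt q$ for all $c,d\in L$; it is $S$-$p$-primary if moreover $\sqrt q=p$ and $p$ is $S$-prime. *)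

(* Defs.v *)
From Stdlib Require Import List Arith.

Record MultLattice := {
  carrier :> Type;
  le : carrier -> carrier -> Prop;
  sup : (carrier -> Prop) -> carrier;
  mul : carrier -> carrier -> carrier;
  one : carrier;
  le_refl : forall x, le x x;
  le_trans : forall x y z, le x y -> le y z -> le x z;
  le_antisym : forall x y, le x y -> le y x -> x = y;
  sup_ub : forall (A : carrier -> Prop) x, A x -> le x (sup A);
  sup_least : forall (A : carrier -> Prop) z,
      (forall x, A x -> le x z) -> le (sup A) z;
  mul_comm : forall x y, mul x y = mul y x;
  mul_assoc : forall x y z, mul x (mul y z) = mul (mul x y) z;
  mul_one : forall x, mul one x = x;
  le_one : forall x, le x one;
  mul_sup : forall (a : carrier) (A : carrier -> Prop),
      mul a (sup A) = sup (fun y => exists x, A x /\ y = mul a x)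
}.

Arguments le {_}. Arguments sup {_}. Arguments mul {_}. Arguments one {_}.

Section Defs.
Variable L : MultLattice.

Definition bot : L := sup (fun _ => False).

Definition inf (A : L -> Prop) : L := sup (fun x => forall y, A y -> le x y).

Definition compact (x : L) : Prop :=
  forall A : L -> Prop, le x (sup A) ->
    exists l : list L, (forall y, In y l -> A y) /\ le x (sup (fun y => In y l)).

Definition compactly_generated : Prop :=
  forall a : L, a = sup (fun x => compact x /\ le x a).

Definition c_lattice : Prop :=
  compactly_generated /\ compact one /\
  (forall x y, compact x -> compact y -> compact (mul x y)).

Definition mult_closed (S : L -> Prop) : Prop :=
  (exists s, S s) /\ (forall s, S s -> compact s) /\
  (forall s t, S s -> S t -> S (mul s t)).

Fixpoint pw (x : L) (n : nat) : L :=
  match n with 0 => one | S m => mul x (pw x m) end.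

Definition rad (a : L) : L :=
  sup (fun x => compact x /\ exists n, 1 <= n /\ le (pw x n) a).

Definition proper (a : L) : Prop := a <> one.

Definition S_prime (S : L -> Prop) (p : L) : Prop :=
  proper p /\ (forall t, S t -> ~ le t p) /\
  exists s, S s /\ forall a b, le (mul a b) p -> le (mul s a) p \/ le (mul s b) p.

Definition S_primary (S : L -> Prop) (q : L) : Prop :=
  proper q /\ (forall t, S t -> ~ le t q) /\
  exists s, S s /\ forall c d, le (mul c d) q -> le (mul s c) q \/ le (mul s d) (rad q).

Definition S_p_primary (S : L -> Prop) (p q : L) : Prop :=
  S_primary S q /\ rad q = p /\ S_prime S p.

End Defs.

Arguments bot {_}. Arguments inf {_}. Arguments compact {_}.
Arguments mult_closed {_}. Arguments rad {_}.
Arguments S_prime {_}. Arguments S_primary {_}. Arguments S_p_primary {_}.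

(* Main.v *)
Require Import Defs.
From Stdlib Require Import Arith.
From Stdlib Require Import Lia Classical List.

#[local] Arguments le_refl {_}. #[local] Arguments le_trans {_}. #[local] Arguments le_antisym {_}.
#[local] Arguments sup_ub {_}. #[local] Arguments sup_least {_}. #[local] Arguments mul_comm {_}.
#[local] Arguments mul_assoc {_}. #[local] Arguments mul_one {_}. #[local] Arguments le_one {_}.
#[local] Arguments mul_sup {_}.

Section H.
Variable L : MultLattice.

Lemma mul_one_r (x : L) : mul x one = x.
Proof. rewrite mul_comm; apply mul_one. Qed.

Lemma mul_mono_r (c a b : L) : le a b -> le (mul c a) (mul c b).
Proof.
  intros H.
  assert (E : b = sup (fun z => z = a \/ z = b)).
  { apply le_antisym. apply sup_ub; auto.
    apply sup_least; intros x [-> | ->]; auto using le_refl. }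
  rewrite E, mul_sup. apply sup_ub. exists a; split; auto.
Qed.

Lemma mul_mono_l (c a b : L) : le a b -> le (mul a c) (mul b c).
Proof. intros H; rewrite (mul_comm a), (mul_comm b); now apply mul_mono_r. Qed.

Lemma mul_le_l (c x : L) : le (mul c x) c.
Proof.
  eapply le_trans. apply mul_mono_r, le_one. rewrite mul_one_r; apply le_refl.
Qed.

Lemma mul_le_r (c x : L) : le (mul x c) c.
Proof. rewrite mul_comm; apply mul_le_l. Qed.

Definition join (u v : L) := sup (fun z => z = u \/ z = v).

Lemma join_mul (c u v a : L) : le (mul c u) a -> le (mul c v) a -> le (mul c (join u v)) a.
Proof.
  intros H1 H2. unfold join; rewrite mul_sup; apply sup_least.
  intros y [x [[-> | ->] ->]]; auto.
Qed.

Lemma pw_mono (x y : L) n : le x y -> le (pw L x n) (pw L y n).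
Proof.
  intros H; induction n; simpl. apply le_refl.
  eapply le_trans. apply mul_mono_l, H. apply mul_mono_r, IHn.
Qed.

Lemma pw_S_le (x : L) n : le (pw L x (S n)) (pw L x n).
Proof. simpl; apply mul_le_r. Qed.

Lemma pw_le_add (x : L) m k : le (pw L x (k + m)) (pw L x m).
Proof.
  induction k; simpl. apply le_refl.
  eapply le_trans. apply mul_le_r. exact IHk.
Qed.

Lemma join_pow : forall m k (c u v a : L),
  le (mul c (pw L u m)) a -> le (mul c (pw L v k)) a ->
  le (mul c (pw L (join u v) (m + k))) a.
Proof.
  induction m as [|m IHm]; intros k c u v a Hu Hv.
  - simpl in Hu. rewrite mul_one_r in Hu. eapply le_trans; [apply mul_le_l | exact Hu].
  - revert c Hu Hv. induction k as [|k IHk]; intros c Hu Hv.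
    + simpl in Hv; rewrite mul_one_r in Hv. eapply le_trans; [apply mul_le_l | exact Hv].
    + change (pw L (join u v) (S m + S k)) with
        (mul (join u v) (pw L (join u v) (m + S k))).
      rewrite (mul_comm (join u v)), mul_assoc.
      apply join_mul.
      * rewrite <- mul_assoc, (mul_comm _ u), mul_assoc.
        apply IHm.
        -- rewrite <- mul_assoc. exact Hu.
        -- rewrite <- mul_assoc, (mul_comm u), mul_assoc.
           eapply le_trans; [apply mul_le_l | exact Hv].
      * rewrite <- mul_assoc, (mul_comm _ v), mul_assoc.
        rewrite Nat.add_succ_r.
        change (le (mul (mul c v) (pw L (join u v) (S m + k))) a).
        apply IHk.
        -- rewrite <- mul_assoc, (mul_comm v), mul_assoc.
           eapply le_trans; [apply mul_le_l | exact Hu].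
        -- rewrite <- mul_assoc. exact Hv.
Qed.

Lemma list_rad (q : L) : forall l : list L,
  (forall y, In y l -> exists n, le (pw L y n) q) ->
  exists m, le (pw L (sup (fun y => In y l)) m) q.
Proof.
  induction l as [|a l IH]; intros Hl.
  - exists 1. simpl. rewrite mul_one_r. apply sup_least. intros x [].
  - destruct (Hl a (or_introl eq_refl)) as [n Hn].
    destruct IH as [m Hm]. { intros y Hy; apply Hl; right; exact Hy. }
    exists (n + m). eapply le_trans. apply pw_mono.
    + instantiate (1 := join a (sup (fun y => In y l))).
      apply sup_least. intros x [-> | Hx].
      * apply sup_ub; left; reflexivity.
      * eapply le_trans; [apply (sup_ub (fun y => In y l)); exact Hx | apply sup_ub; right; reflexivity].
    + rewrite <- (mul_one (pw L _ _)). apply join_pow; rewrite mul_one; auto.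
Qed.

Lemma rad_pow (q x : L) : compact x -> le x (rad q) -> exists m, 1 <= m /\ le (pw L x m) q.
Proof.
  unfold rad. intros Hc Hx. destruct (Hc _ Hx) as [l [Hl Hle]].
  destruct (list_rad q l) as [m Hm].
  { intros y Hy; destruct (Hl y Hy) as [_ [n [_ Hn]]]; eauto. }
  exists (S m). split; [lia|].
  eapply le_trans. apply pw_S_le. eapply le_trans. apply pw_mono; exact Hle. exact Hm.
Qed.

Lemma rad_mono (a b : L) : le a b -> le (rad a) (rad b).
Proof.
  intros Hab. unfold rad; apply sup_least; intros x [Hc [n [Hn Hx]]].
  apply sup_ub. split; auto. exists n; split; auto; eapply le_trans; eauto.
Qed.

Lemma inf_lb (A : L -> Prop) y : A y -> le (inf A) y.
Proof. intros Hy; unfold inf; apply sup_least; intros x Hx; apply Hx; auto. Qed.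

Lemma inf_glb (A : L -> Prop) x : (forall y, A y -> le x y) -> le x (inf A).
Proof. intros H; unfold inf; apply sup_ub; auto. Qed.

Lemma absorb1 (s t c : L) : le (mul (mul s t) c) (mul t c).
Proof.
  rewrite (mul_comm s t), <- mul_assoc, (mul_comm s c), mul_assoc; apply mul_le_l.
Qed.

Lemma absorb2 (s t c : L) : le (mul (mul s t) c) (mul s c).
Proof.
  rewrite <- mul_assoc, (mul_comm t c), mul_assoc; apply mul_le_l.
Qed.

End H.

Theorem mainTheorem8 (L : MultLattice) (hL : c_lattice L)
  (S : L -> Prop) (hS : mult_closed S) (h1 : S one) (h0 : ~ S bot)
  (p : L) (n : nat) (q : nat -> L) (hn : 1 <= n)
  (hq : forall i, 1 <= i <= n -> S_p_primary S p (q i)) :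
  S_p_primary S p (inf (fun y => exists i, 1 <= i <= n /\ y = q i)).
Proof.
  set (Q := inf (fun y => exists i, 1 <= i <= n /\ y = q i)).
  assert (hQi : forall i, 1 <= i <= n -> le Q (q i)).
  { intros i Hi. apply inf_lb. exists i; auto. }
  assert (q1 := hq 1 (conj (le_n 1) hn)).
  assert (Erad : rad Q = p).
  { apply le_antisym.
    - eapply le_trans. apply rad_mono, (hQi 1); lia.
      destruct q1 as [_ [E _]]; rewrite E; apply le_refl.
    - destruct hL as [hcg _]. rewrite (hcg p). apply sup_least. intros x [Hc Hxp].
      assert (Hall : forall k, exists M, 1 <= M /\
                forall i, 1 <= i <= n -> i <= k -> le (pw L x M) (q i)).
      { induction k as [|k IHk].
        - exists 1; split; [lia|]; intros; lia.
        - destruct IHk as [M [HM HMi]]. destruct (le_lt_dec (Datatypes.S k) n).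
          + destruct (hq (Datatypes.S k)) as [_ [E _]]; [lia|].
            destruct (rad_pow L (q (Datatypes.S k)) x Hc) as [m [Hm Hxm]].
            { rewrite E; auto. }
            exists (M + m). split; [lia|]. intros i Hi Hik.
            destruct (Nat.eq_dec i (Datatypes.S k)).
            * subst i. eapply le_trans; [apply pw_le_add | exact Hxm].
            * rewrite Nat.add_comm. eapply le_trans; [apply pw_le_add | apply HMi; lia].
          + exists M; split; auto; intros; apply HMi; lia. }
      destruct (Hall n) as [M [HM HMi]]. apply sup_ub. split; auto.
      exists M; split; auto. apply inf_glb. intros y [i [Hi ->]]. apply HMi; lia. }
  split; [| split; [exact Erad | destruct q1 as [_ [_ Hp]]; exact Hp]].
  split.
  { unfold proper. intros E. destruct q1 as [[Hpr _] _]. apply Hpr.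
    apply le_antisym. apply le_one. fold Q in E. rewrite <- E; apply hQi; lia. }
  split.
  { intros t Ht Hle. destruct q1 as [[_ [Hn1 _]] _]. apply (Hn1 t Ht).
    eapply le_trans; [exact Hle | apply hQi; lia]. }
  destruct hS as [_ [_ hSm]].
  assert (Hall : forall k, exists s, S s /\ forall i, 1 <= i <= n -> i <= k ->
     forall c d, le (mul c d) (q i) -> le (mul s c) (q i) \/ le (mul s d) p).
  { induction k as [|k IHk].
    - exists one; split; auto; intros; lia.
    - destruct IHk as [s [Hs Hsi]]. destruct (le_lt_dec (Datatypes.S k) n).
      + destruct (hq (Datatypes.S k)) as [[_ [_ [t [Ht Hti]]]] [E _]]; [lia|].
        exists (mul s t). split; [apply hSm; auto|].
        intros i Hi Hik c d Hcd. destruct (Nat.eq_dec i (Datatypes.S k)).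
        * subst i. destruct (Hti c d Hcd) as [H|H]; [left|right].
          -- eapply le_trans; [apply absorb1 | exact H].
          -- rewrite <- E. eapply le_trans; [apply absorb1 | exact H].
        * destruct (Hsi i Hi ltac:(lia) c d Hcd) as [H|H]; [left|right];
            (eapply le_trans; [apply absorb2 | exact H]).
      + exists s; split; auto; intros; apply Hsi; auto; lia. }
  destruct (Hall n) as [s [Hs Hsi]]. exists s. split; auto.
  intros c d Hcd. fold Q in Hcd |- *. rewrite Erad.
  destruct (classic (le (mul s d) p)) as [H|H]; [right; exact H|left].
  apply inf_glb. intros y [i [Hi ->]].
  destruct (Hsi i Hi ltac:(lia) c d (le_trans _ _ _ Hcd (hQi i Hi))) as [H'|H']; auto.
  contradiction.
Qed.
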